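(* Let $T(x)$ be an $N\times N$ matrix polynomial such that $T(x)^{-1}$ is also a matrix polynomial, and let $W,\widetilde W$ be weight matrices with $W(x)=T(x)\widetilde W(x)T(x)^*$. Then $\mathcal F_R(W)=T(x)\,\mathcal F_R(\widetilde W)\,T(x)^{-1}$. Moreover, an operator $\mathcal A\in\mathcal F_R(W)$ is $W$-symmetric if and only if $T(x)^{-1}\mathcal A\,T(x)\in\mathcal F_R(\widetilde W)$ is $\widetilde W$-symmetric.
   Context: Weight matrices are smooth, a.e. positive definite matrix functions on an interval with finite moments; standing assumption: each derivative $W^{(n)}$ decays exponentially at infinity and $W^{(n)}p_n$ has finite moments for some scalar polynomial $p_n$. $\langle P,Q\rangle_W=\int P(x)W(x)Q(x)^*dx$. Differential operators act on the right: $P\cdot\sum_j\partial^jF_j=\sum_j\partial^j(P)F_j$. An operator $\mathfrak D$ with polynomial coefficients is $W$-adjointable if there is an operator $\widetilde{\mathfrak D}$ with polynomial coefficients with $\langle P\cdot\mathfrak D,Q\rangle_W=\langle P,Q\cdot\widetilde{\mathfrak D}\rangle_W$ for all matrix polynomials $P,Q$; $\mathcal F_R(W)$ (right Fourier algebra) is the set of $W$-adjointable operators with polynomial coefficients (whose $W$-adjoint has polynomial coefficients). $\mathfrak D$ is $W$-symmetric if $\langle P\cdot\mathfrak D,Q\rangle_W=\langle P,Q\cdot\mathfrak D\rangle_W$ for all $P,Q$. Conjugation $T\mathcal BT^{-1}$ denotes the composition of the operators of multiplication by $T$, $\mathcal B$, and multiplication by $T^{-1}$. *)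

(* Defs.v *)
From HB Require Import structures.
From mathcomp Require Import all_boot all_order all_algebra.
From mathcomp Require Import all_classical all_reals all_analysis.
From mathcomp Require Import complex.
Set Implicit Arguments. Unset Strict Implicit. Unset Printing Implicit Defensive.
Import Order.TTheory GRing.Theory Num.Theory.
Import numFieldNormedType.Exports.
Local Open Scope classical_set_scope.
Local Open Scope ring_scope.
Local Open Scope complex_scope.

Section WeightDefs.
Variables (R : realType) (N : nat).
Local Notation C := R[i].

Definition ctr (m n : nat) (A : 'M[C]_(m, n)) : 'M[C]_(n, m) :=
  (map_mx (@conjc R) A)^T.

Definition mpeval (P : 'M[{poly C}]_N) (x : R) : 'M[C]_N :=
  map_mx (fun p => p.[x%:C]) P.

Definition cderiv (n : nat) (f : R -> C) : R -> C :=
  fun x => (derive1n n (fun t => complex.Re (f t)) x)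
           +i* (derive1n n (fun t => complex.Im (f t)) x).

Definition cint (D : set R) (f : R -> C) : C :=
  (\int[lebesgue_measure]_(x in D) complex.Re (f x))
  +i* (\int[lebesgue_measure]_(x in D) complex.Im (f x)).

Definition finite_moments (D : set R) (f : R -> C) : Prop :=
  forall k : nat,
    lebesgue_measure.-integrable D (fun x => (x ^+ k * complex.Re (f x))%:E) /\
    lebesgue_measure.-integrable D (fun x => (x ^+ k * complex.Im (f x))%:E).

Definition smooth_on (D : set R) (f : R -> C) : Prop :=
  forall (n : nat) (x : R), D x ->
    derivable (derive1n n (fun t => complex.Re (f t))) x 1 /\
    derivable (derive1n n (fun t => complex.Im (f t))) x 1.

(* Exponential decay at infinity (vacuous if D is bounded). *)
Definition exp_decay (D : set R) (f : R -> C) : Prop :=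
  exists c K M : R, 0 < c /\
    forall x, D x -> M <= `|x| ->
      Normc.normc (f x) <= K * expR (- (c * `|x|)).

Definition posdef (A : 'M[C]_N) : Prop :=
  A = ctr A /\
  forall v : 'rV[C]_N, v != 0 -> 0 < (v *m A *m ctr v) 0 0.

(* Weight matrix on the (open, nonempty) interval I, including the
   standing assumptions of the paper. *)
Definition weight_matrix (I : set R) (W : R -> 'M[C]_N) : Prop :=
  [/\ open I, is_interval I & I !=set0] /\
  [/\ (forall i j, smooth_on I (fun x => W x i j)),
      {ae lebesgue_measure, forall x, I x -> posdef (W x)},
      (forall i j, finite_moments I (fun x => W x i j)) &
      (forall n : nat,
         (forall i j, exp_decay I (cderiv n (fun x => W x i j))) /\
         exists p : {poly C}, p != 0 /\
           forall i j, finite_moments I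
             (fun x => cderiv n (fun y => W y i j) x * p.[x%:C]))].

Definition mip (I : set R) (W : R -> 'M[C]_N) (P Q : 'M[{poly C}]_N)
  : 'M[C]_N :=
  \matrix_(i, j) cint I (fun x => (mpeval P x *m W x *m ctr (mpeval Q x)) i j).

(* A differential operator with matrix polynomial coefficients
   sum_j d^j F_j, represented by the list [:: F_0; F_1; ...]. *)
Definition diffop := seq 'M[{poly C}]_N.

Definition dact (D : diffop) (P : 'M[{poly C}]_N) : 'M[{poly C}]_N :=
  \sum_(j < size D) map_mx (fun p => p^`(j)) P *m nth 0 D j.

Definition W_adjointable (I : set R) (W : R -> 'M[C]_N) (D : diffop) : Prop :=
  exists Dt : diffop, forall P Q : 'M[{poly C}]_N,
    mip I W (dact D P) Q = mip I W P (dact Dt Q).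

Definition in_FR (I : set R) (W : R -> 'M[C]_N) (D : diffop) : Prop :=
  W_adjointable I W D.

Definition W_symmetric (I : set R) (W : R -> 'M[C]_N) (D : diffop) : Prop :=
  forall P Q : 'M[{poly C}]_N, mip I W (dact D P) Q = mip I W P (dact D Q).

End WeightDefs.

(* Main.v *)
Require Import Defs.
From HB Require Import structures.
From mathcomp Require Import all_boot all_order all_algebra.
From mathcomp Require Import all_classical all_reals all_analysis.
From mathcomp Require Import complex.
Set Implicit Arguments. Unset Strict Implicit. Unset Printing Implicit Defensive.
Import Order.TTheory GRing.Theory Num.Theory.
Import numFieldNormedType.Exports.
Local Open Scope classical_set_scope.
Local Open Scope ring_scope.
Local Open Scope complex_scope.

Definition dm (R : realType) (N : nat) (j : nat) (P : 'M[{poly R[i]}]_N) :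
  'M[{poly R[i]}]_N := map_mx (fun p => p^`(j)) P.

Definition reprF (R : realType) (N : nat)
  (F : 'M[{poly R[i]}]_N -> 'M[{poly R[i]}]_N) : Prop :=
  exists n (c : nat -> 'M[{poly R[i]}]_N),
    forall P, F P = \sum_(j < n) dm j P *m c j.

Lemma reprF_diffop (R : realType) (N : nat) F :
  @reprF R N F -> exists D : diffop R N, forall P, F P = dact D P.
Proof.
move=> [n [c Hc]]; exists (mkseq c n) => P.
rewrite Hc /dact size_mkseq; apply: eq_bigr => j _.
by rewrite nth_mkseq.
Qed.

Lemma diffop_reprF (R : realType) (N : nat) (D : diffop R N) :
  @reprF R N (dact D).
Proof. by exists (size D), (nth 0 D). Qed.

Lemma reprF_widen (R : realType) (N : nat) F n (c : nat -> 'M[{poly R[i]}]_N) m :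
  (n <= m)%N -> (forall P, F P = \sum_(j < n) dm j P *m c j) ->
  forall P, F P = \sum_(j < m) dm j P *m (if (j < n)%N then c j else 0).
Proof.
move=> nm Hc P; rewrite Hc (@big_ord_widen _ _ _ n m (fun j => dm j P *m c j) nm).
rewrite big_mkcond /=; apply: eq_bigr => j _.
by case: ifP => _ //; rewrite mulmx0.
Qed.

Lemma reprF_add (R : realType) (N : nat) F G :
  @reprF R N F -> reprF G -> reprF (fun P => F P + G P).
Proof.
move=> [n1 [c1 H1]] [n2 [c2 H2]].
exists (maxn n1 n2), (fun j => (if (j < n1)%N then c1 j else 0) +
                              (if (j < n2)%N then c2 j else 0)) => P.
rewrite (reprF_widen (leq_maxl n1 n2) H1) (reprF_widen (leq_maxr n1 n2) H2).
by rewrite -big_split /=; apply: eq_bigr => j _; rewrite mulmxDr.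
Qed.

Lemma reprF_mulr (R : realType) (N : nat) F (U : 'M[{poly R[i]}]_N) :
  @reprF R N F -> reprF (fun P => F P *m U).
Proof.
move=> [n [c H]]; exists n, (fun j => c j *m U) => P.
by rewrite H mulmx_suml; apply: eq_bigr => j _; rewrite mulmxA.
Qed.

Lemma reprF_zero (R : realType) (N : nat) : @reprF R N (fun _ => 0).
Proof. by exists 0%N, (fun _ => 0) => P; rewrite big_ord0. Qed.

Lemma reprF_sum (R : realType) (N : nat) m (F : nat -> _ -> _) :
  (forall j, @reprF R N (F j)) -> reprF (fun P => \sum_(j < m) F j P).
Proof.
move=> HF; elim: m => [|m IH].
  by case: (@reprF_zero R N) => n [c H]; exists n, c => P; rewrite big_ord0; apply: H.
case: (reprF_add IH (HF m)) => n [c H]; exists n, c => P.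
by rewrite big_ord_recr /= H.
Qed.

Lemma dm_dm (R : realType) (N : nat) j (P : 'M[{poly R[i]}]_N) :
  dm j (dm 1 P) = dm j.+1 P.
Proof. by apply/matrixP => a b; rewrite !mxE derivn1 derivSn. Qed.

Lemma dm0 (R : realType) (N : nat) (P : 'M[{poly R[i]}]_N) : dm 0 P = P.
Proof. by apply/matrixP => a b; rewrite !mxE derivn0. Qed.

Lemma dmD (R : realType) (N : nat) j (P Q : 'M[{poly R[i]}]_N) :
  dm j (P + Q) = dm j P + dm j Q.
Proof. by apply/matrixP => a b; rewrite !mxE derivnD. Qed.

Lemma dm1M (R : realType) (N : nat) (P S : 'M[{poly R[i]}]_N) :
  dm 1 (P *m S) = dm 1 P *m S + P *m dm 1 S.
Proof.
apply/matrixP => a b; rewrite !mxE /= raddf_sum -big_split /=.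
by apply: eq_bigr => k _; rewrite !mxE /= derivM.
Qed.

Lemma reprF_pre_deriv (R : realType) (N : nat) F :
  @reprF R N F -> reprF (fun P => F (dm 1 P)).
Proof.
move=> [n [c H]]; exists n.+1, (fun j => if j is j'.+1 then c j' else 0) => P.
rewrite H big_ord_recl /= mulmx0 add0r; apply: eq_bigr => j _.
by rewrite dm_dm.
Qed.

Lemma reprF_conj_dm (R : realType) (N : nat) j :
  forall S : 'M[{poly R[i]}]_N, reprF (fun P => dm j (P *m S)).
Proof.
elim: j => [|j IH] S.
  exists 1%N, (fun _ => S) => P.
  by rewrite big_ord_recl big_ord0 addr0 !dm0.
have H := reprF_add (reprF_pre_deriv (IH S)) (IH (dm 1 S)).
case: H => n [c H]; exists n, c => P.
by rewrite -H -dm_dm dm1M dmD.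
Qed.

Lemma conj_diffop (R : realType) (N : nat) (A : diffop R N)
  (S U : 'M[{poly R[i]}]_N) :
  exists B : diffop R N, forall P, dact B P = dact A (P *m S) *m U.
Proof.
suff: reprF (fun P => dact A (P *m S) *m U).
  by case/reprF_diffop => B HB; exists B => P; rewrite HB.
apply: reprF_mulr; rewrite /dact.
apply: (@reprF_sum R N (size A) (fun j P => dm j (P *m S) *m nth 0 A j)) => j.
exact: reprF_mulr (reprF_conj_dm j S).
Qed.

Lemma mpevalM (R : realType) (N : nat) (P Q : 'M[{poly R[i]}]_N) x :
  mpeval (P *m Q) x = mpeval P x *m mpeval Q x.
Proof.
rewrite /mpeval.
have -> : (fun p : {poly R[i]} => p.[x%:C]) = horner_eval x%:C by [].
exact: map_mxM.
Qed.

Lemma ctrM (R : realType) (N : nat) (A B : 'M[R[i]]_N) :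
  ctr (A *m B) = ctr B *m ctr A.
Proof. by rewrite /ctr map_mxM trmx_mul. Qed.

Lemma mip_T (R : realType) (N : nat) (I : set R) (W Wt : R -> 'M[R[i]]_N)
  (T : 'M[{poly R[i]}]_N) :
  (forall x, I x -> W x = mpeval T x *m Wt x *m ctr (mpeval T x)) ->
  forall P Q, mip I W P Q = mip I Wt (P *m T) (Q *m T).
Proof.
move=> HW P Q.
have E : forall x, I x -> (mpeval P x *m W x *m ctr (mpeval Q x)) =
  (mpeval (P *m T) x *m Wt x *m ctr (mpeval (Q *m T) x)).
  move=> x Ix; rewrite (HW x Ix) (mpevalM P T) (mpevalM Q T) (ctrM (mpeval Q x)).
  by rewrite !mulmxA.
rewrite /mip; apply: eq_mx => a b; rewrite /cint /Rintegral.
apply: f_equal2; apply: congr1; apply: eq_integral => x /[!inE] Ix; by rewrite E.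
Qed.

Lemma mulKT (R : realType) (N : nat) (T Ti P : 'M[{poly R[i]}]_N) :
  Ti *m T = 1%:M -> P *m Ti *m T = P.
Proof. by move=> H; rewrite -mulmxA H mulmx1. Qed.

Theorem proposition3p4 (R : realType) (N : nat) (I : set R)
  (W Wt : R -> 'M[R[i]]_N) (T Ti : 'M[{poly R[i]}]_N) :
  T *m Ti = 1%:M -> Ti *m T = 1%:M ->
  weight_matrix I W -> weight_matrix I Wt ->
  (forall x, I x -> W x = mpeval T x *m Wt x *m ctr (mpeval T x)) ->
  (* F_R(W) = T F_R(Wt) T^{-1} *)
  (forall A : diffop R N,
     in_FR I W A <->
     exists B : diffop R N, in_FR I Wt B /\
       forall P, dact A P = dact B (P *m T) *m Ti) /\
  (* A in F_R(W) is W-symmetric iff T^{-1} A T in F_R(Wt) is Wt-symmetric *)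
  (forall A B : diffop R N,
     in_FR I W A ->
     (forall P, dact B P = dact A (P *m Ti) *m T) ->
     in_FR I Wt B /\ (W_symmetric I W A <-> W_symmetric I Wt B)).
Proof.
move=> HTTi HTiT _ _ HW.
have MT := mip_T HW.
have conjFR : forall A B : diffop R N, in_FR I W A ->
    (forall P, dact B P = dact A (P *m Ti) *m T) -> in_FR I Wt B.
  move=> A B [At HA] HB.
  have [Bt HBt] := conj_diffop At Ti T.
  exists Bt => P Q.
  rewrite HB HBt -{1}(mulKT Q HTiT) -MT HA MT.
  by rewrite (mulKT P HTiT).
have BA : forall A B : diffop R N,
    (forall P, dact B P = dact A (P *m Ti) *m T) ->
    forall P, dact A P *m T = dact B (P *m T).
  by move=> A B HB P; rewrite HB -mulmxA HTTi mulmx1.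
split.
  move=> A; split.
    move=> HA; have [B HB] := conj_diffop A Ti T.
    exists B; split; first exact: conjFR HB.
    by move=> P; rewrite -(BA A B HB) -mulmxA HTTi mulmx1.
  move=> [B [[Bt HBt] HAB]].
  have [At HAt] := conj_diffop Bt T Ti.
  exists At => P Q.
  rewrite MT HAB (mulKT _ HTiT) HBt MT HAt (mulKT _ HTiT) //.
move=> A B HA HB; split; first exact: conjFR HB.
split.
  move=> Hs P Q.
  rewrite HB -{1}(mulKT Q HTiT) -MT Hs MT (mulKT P HTiT).
  by rewrite HB.
move=> Hs P Q.
rewrite MT (BA A B HB) Hs -(BA A B HB) -MT; reflexivity.
Qed.
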